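(* Suppose $a\colon\mathbb{N}\to\mathbb{C}$ has the property that for each $N\in\mathbb{N}$ there exist infinitely many $m\in\mathbb{N}$ such that $|a(m)|>N|a(m+j)|$ for every $j\in\mathbb{Z}$ with $1\le|j|\le N$. Then the power series $\sum_{n\ge0}a(n)x^n\in\mathbb{C}((x))$ does not satisfy any non-trivial (linear) differential equation $\sum_{i=0}^d q_i f^{(i)}=0$ with coefficients $q_i\in\mathbb{C}(x)$ not all zero, and hence is transcendental over $\mathbb{C}(x)$.
   Context: $\mathbb{C}((x))$ is the field of formal Laurent series in $x$ with complex coefficients, with the usual formal derivation $d/dx$; $f^{(i)}$ denotes the $i$-th derivative. *)

(* Defs.v *)
From HB Require Import structures.
From mathcomp Require Import all_boot all_order all_algebra.
From mathcomp Require Import complex reals.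
Set Implicit Arguments. Unset Strict Implicit. Unset Printing Implicit Defensive.
Import Order.TTheory GRing.Theory Num.Theory.
Local Open Scope ring_scope.

(* Formal power series over a ring K, as coefficient sequences:
   f represents \sum_n f n x^n (an element of K[[x]] inside K((x))). *)
Definition series (K : nzRingType) := nat -> K.

Section Series.
Variable K : comNzRingType.

Definition smul (f g : series K) : series K :=
  fun n => \sum_(k < n.+1) f k * g (n - k)%N.

Definition sone : series K := fun n => (n == 0%N)%:R.

Definition sderiv (f : series K) : series K := fun n => f n.+1 *+ n.+1.

Definition sderivn (i : nat) (f : series K) : series K := iter i sderiv f.

Definition sexp (f : series K) (k : nat) : series K := iter k (smul f) sone.

Definition ser_of_poly (p : {poly K}) : series K := fun n => p`_n.

Definition diff_op_apply (d : nat) (q : 'I_d.+1 -> {poly K}) (f : series K)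
  : series K :=
  fun n => \sum_(i < d.+1) smul (ser_of_poly (q i)) (sderivn i f) n.

(* P(x, f) for P = \sum_k P_k(x) y^k *)
Definition poly_eval_series (P : {poly {poly K}}) (f : series K) : series K :=
  fun n => \sum_(k < size P) smul (ser_of_poly P`_k) (sexp f k) n.
End Series.

Definition ext_int (K : nzRingType) (a : nat -> K) (z : int) : K :=
  match z with Posz n => a n | Negz _ => 0 end.

Definition gap_property (R : realType) (a : nat -> R[i]) : Prop :=
  forall N : nat, forall M : nat, exists m : nat, (M <= m)%N /\
    forall j : int, (1 <= `|j|)%R -> (`|j| <= N%:Z)%R ->
      N%:R * `|ext_int a (m%:Z + j)| < `|a m|.

(* Main.v *)
Require Import Defs.
From HB Require Import structures.
From mathcomp Require Import all_boot all_order all_algebra.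
From mathcomp Require Import complex reals.
From mathcomp Require Import boolp zify ring.
Import Order.TTheory GRing.Theory Num.Theory.
Set Implicit Arguments. Unset Strict Implicit. Unset Printing Implicit Defensive.
Local Open Scope ring_scope.


Section PS.
Variable K : comNzRingType.

Definition ps : Type := nat -> K.
HB.instance Definition _ := Choice.on ps.

Definition psadd (f g : ps) : ps := fun n => f n + g n.
Definition psopp (f : ps) : ps := fun n => - f n.
Definition ps0 : ps := fun _ => 0.

Lemma psaddA : associative psadd.
Proof. by move=> f g h; apply: funext => n; rewrite /psadd addrA. Qed.
Lemma psaddC : commutative psadd.
Proof. by move=> f g; apply: funext => n; rewrite /psadd addrC. Qed.
Lemma psadd0 : left_id ps0 psadd.
Proof. by move=> f; apply: funext => n; rewrite /psadd /ps0 add0r. Qed.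
Lemma psaddN : left_inverse ps0 psopp psadd.
Proof. by move=> f; apply: funext => n; rewrite /psadd /ps0 /psopp addNr. Qed.

HB.instance Definition _ := GRing.isZmodule.Build ps psaddA psaddC psadd0 psaddN.

Definition agr n (p : {poly K}) (f : ps) := forall k, (k <= n)%N -> p`_k = f k.
Definition tr n (f : ps) : {poly K} := \poly_(i < n.+1) f i.

Lemma agr_tr n f : agr n (tr n f) f.
Proof. by move=> k kn; rewrite coef_poly ltnS kn. Qed.

Lemma agrW n m p f : (m <= n)%N -> agr n p f -> agr m p f.
Proof. by move=> mn H k km; apply: H; apply: leq_trans mn. Qed.

Lemma agr_mul n p q f g : agr n p f -> agr n q g -> agr n (p * q) (smul f g).
Proof.
move=> Hp Hq k kn; rewrite coefM /smul; apply: eq_bigr => j _.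
have jk : (j <= k)%N by rewrite -ltnS.
rewrite Hp ?Hq //; [exact: leq_trans (leq_subr _ _) kn | exact: leq_trans jk kn].
Qed.

Lemma agr_eq n p f g : agr n p f -> agr n p g -> f n = g n.
Proof. by move=> H1 H2; rewrite -H1 // -H2. Qed.

Lemma agr_add n p q f g : agr n p f -> agr n q g -> agr n (p + q) (f + g).
Proof. by move=> Hp Hq k kn; rewrite coefD Hp ?Hq. Qed.

Lemma agr_one n : agr n 1 (sone K).
Proof. by move=> k _; rewrite coef1 /sone; case: (k == 0%N). Qed.

Lemma smulA : associative (@smul K).
Proof.
move=> f g h; apply: funext => n.
apply: (@agr_eq n (tr n f * (tr n g * tr n h))).
  by apply: agr_mul; [apply: agr_tr|apply: agr_mul; apply: agr_tr].
by rewrite mulrA; apply: agr_mul; [apply: agr_mul; apply: agr_tr|apply: agr_tr].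
Qed.

Lemma smulC : commutative (@smul K).
Proof.
move=> f g; apply: funext => n.
apply: (@agr_eq n (tr n f * tr n g)); first by apply: agr_mul; apply: agr_tr.
by rewrite mulrC; apply: agr_mul; apply: agr_tr.
Qed.

Lemma smul1 : left_id (sone K) (@smul K).
Proof.
move=> f; apply: funext => n.
apply: (@agr_eq n (1 * tr n f)); first by apply: agr_mul; [apply: agr_one|apply: agr_tr].
by rewrite mul1r; apply: agr_tr.
Qed.

Lemma smulDl : left_distributive (@smul K) (@psadd).
Proof.
move=> f g h; apply: funext => n.
apply: (@agr_eq n ((tr n f + tr n g) * tr n h)).
  by apply: agr_mul; [apply: agr_add|]; apply: agr_tr.
by rewrite mulrDl; apply: agr_add; apply: agr_mul; apply: agr_tr.
Qed.

Lemma sone_neq0 : sone K != ps0.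
Proof.
apply/eqP => /(congr1 (fun f => f 0%N)); rewrite /sone /ps0 /= => /eqP.
by rewrite oner_eq0.
Qed.

HB.instance Definition _ := GRing.Zmodule_isComNzRing.Build ps smulA smulC smul1 smulDl sone_neq0.

Lemma psmulE (f g : ps) : f * g = smul f g. Proof. by []. Qed.
Lemma psaddE (f g : ps) n : (f + g) n = f n + g n. Proof. by []. Qed.
Lemma psoppE (f : ps) n : (- f) n = - f n. Proof. by []. Qed.
Lemma ps0E n : (0 : ps) n = 0. Proof. by []. Qed.
Lemma ps1E : (1 : ps) = sone K. Proof. by []. Qed.
Lemma pssumE I (r : seq I) (P : pred I) (F : I -> ps) n :
  (\sum_(i <- r | P i) F i) n = \sum_(i <- r | P i) F i n.
Proof. by elim/big_rec2: _ => // i y1 y2 _ <-. Qed.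

Lemma agr_mulp n p q (f g : ps) : agr n p f -> agr n q g -> agr n (p * q) (f * g).
Proof. exact: agr_mul. Qed.

End PS.

Section PS2.
Variable K : comNzRingType.
Local Notation ps := (ps K).

Definition phi (p : {poly K}) : ps := ser_of_poly p.

Lemma agr_phi n p : agr n p (phi p).
Proof. by move=> k _. Qed.

Lemma phi_zmod : zmod_morphism phi.
Proof. by move=> p q; apply: funext => n; rewrite /phi /ser_of_poly coefB. Qed.

Lemma phi_monoid : monoid_morphism phi.
Proof.
split.
  by apply: funext => n; rewrite /phi /ser_of_poly coef1 ps1E /sone; case: (n == 0%N).
move=> p q; apply: funext => n.
apply: (@agr_eq _ n (p * q)); first exact: agr_phi.
by apply: agr_mulp; apply: agr_phi.
Qed.

HB.instance Definition _ := GRing.isZmodMorphism.Build _ _ phi phi_zmod.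
HB.instance Definition _ := GRing.isMonoidMorphism.Build _ _ phi phi_monoid.

Lemma phiE p n : phi p n = p`_n. Proof. by []. Qed.

Lemma phi_inj p : phi p = 0 -> p = 0.
Proof. by move=> H; apply/polyP => n; rewrite -phiE H coef0. Qed.

Definition dps (f : ps) : ps := sderiv f.

Lemma agr_deriv n p f : agr n.+1 p f -> agr n p^`() (dps f).
Proof. by move=> H k kn; rewrite coef_deriv H. Qed.

Lemma dpsD f g : dps (f + g) = dps f + dps g.
Proof. by apply: funext => n; rewrite /dps /sderiv !psaddE mulrnDl. Qed.

Lemma dpsN f : dps (- f) = - dps f.
Proof. by apply: funext => n; rewrite /dps /sderiv !psoppE mulNrn. Qed.

Lemma dpsB f g : dps (f - g) = dps f - dps g.
Proof. by rewrite dpsD dpsN. Qed.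

Lemma dps0 : dps 0 = 0.
Proof. by apply: funext => n; rewrite /dps /sderiv ps0E mul0rn. Qed.

Lemma dpsM f g : dps (f * g) = dps f * g + f * dps g.
Proof.
apply: funext => n.
have H : agr n.+1 (tr n.+1 f * tr n.+1 g) (f * g) by apply: agr_mulp; apply: agr_tr.
apply: (@agr_eq _ n _ _ _ (agr_deriv H)).
rewrite derivM; apply: agr_add; apply: agr_mulp.
- by apply: agr_deriv; apply: agr_tr.
- by apply: (agrW (leqnSn n)); apply: agr_tr.
- by apply: (agrW (leqnSn n)); apply: agr_tr.
- by apply: agr_deriv; apply: agr_tr.
Qed.

Lemma dps_phi p : dps (phi p) = phi p^`().
Proof. by apply: funext => n; rewrite /dps /sderiv !phiE coef_deriv. Qed.

Lemma dps_sum I (r : seq I) (P : pred I) (F : I -> ps) :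
  dps (\sum_(i <- r | P i) F i) = \sum_(i <- r | P i) dps (F i).
Proof. by elim/big_rec2: _ => [|i y1 y2 _ <-]; rewrite ?dps0 ?dpsD. Qed.

Lemma sderivnE i (f : ps) m : sderivn i f m = f (m + i)%N *+ (m + i) ^_ i.
Proof.
elim: i m => [|i IH] m; first by rewrite addn0 ffactn0.
rewrite /sderivn iterS -/(sderivn i f) /sderiv IH -mulrnA addSnnS.

by rewrite ffactnSr addnS subSn ?leq_addl // addnK.
Qed.

Lemma sderivnS i (f : ps) : sderivn i.+1 f = dps (sderivn i f).
Proof. by rewrite /sderivn iterS. Qed.

End PS2.

Section Dom.
Variable K : idomainType.
Local Notation ps := (ps K).

Lemma ps_neq0 (f : ps) : f != 0 -> exists n, f n != 0.
Proof.
move=> /eqP H; apply: contrapT => H'; apply: H; apply: funext => n.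
by apply/eqP; apply: contrapT => Hn; apply: H'; exists n; apply/negP.
Qed.

Lemma psmul_neq0 (f g : ps) : f != 0 -> g != 0 -> f * g != 0.
Proof.
move=> /ps_neq0 Hf /ps_neq0 Hg.
pose i := ex_minn Hf; pose j := ex_minn Hg.
have [fi0 fmin] : f i != 0 /\ forall k, (k < i)%N -> f k = 0.
  rewrite /i; case: ex_minnP => k Hk Hmin; split => // l lk.
  by apply/eqP; apply: contraTeq lk => fl; rewrite -leqNgt; apply: Hmin; case: (f l == 0) fl.
have [gj0 gmin] : g j != 0 /\ forall k, (k < j)%N -> g k = 0.
  rewrite /j; case: ex_minnP => k Hk Hmin; split => // l lk.
  by apply/eqP; apply: contraTeq lk => fl; rewrite -leqNgt; apply: Hmin; case: (g l == 0) fl.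
apply/eqP => /(congr1 (fun h => h (i + j)%N)); rewrite ps0E psmulE /smul.
have ii : (i < (i + j).+1)%N by rewrite ltnS leq_addr.
rewrite (bigD1 (Ordinal ii)) //= big1 ?addr0.
  by rewrite addKn => /eqP; rewrite mulf_eq0 (negPf fi0) (negPf gj0).
move=> k /eqP kneq; case: (ltngtP k i) => [ki|ik|ki].
- by rewrite fmin // mul0r.
- by rewrite gmin ?mulr0 //; have := ltn_ord k; lia.
- by exfalso; apply: kneq; apply: val_inj.
Qed.

End Dom.

Lemma ffact_mono_base a b i : (a <= b)%N -> (a ^_ i <= b ^_ i)%N.
Proof.
move=> ab; elim: i => [|i IH]; rewrite ?ffactn0 // !ffactnSr leq_mul //.
exact: leq_sub2r.
Qed.

Lemma ffact_mono_exp m i j : (i <= j)%N -> (j <= m)%N -> (m ^_ i <= m ^_ j)%N.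
Proof.
elim: j => [|j IH] ij jm; first by move: ij; rewrite leqn0 => /eqP ->.
move: ij; rewrite leq_eqVlt => /orP [/eqP -> //|ij].
rewrite ffactnSr; apply: leq_trans (IH ij (ltnW jm)) _.
by rewrite leq_pmulr // subn_gt0.
Qed.

Lemma ffact_shift m E i : (i <= m)%N -> ((m + E) ^_ i <= (E.+1) ^ i * m ^_ i)%N.
Proof.
elim: i => [|i IH] im; first by rewrite !ffactn0 expn0.
rewrite !ffactnSr expnS.
have h1 := IH (ltnW im).
have h2 : (m + E - i <= E.+1 * (m - i))%N by nia.
have := leq_mul h1 h2.
set X := (_ ^ i)%N. set Y := (m ^_ i)%N. nia.
Qed.

Lemma ffact_bound idx m E i D : (idx <= m + E)%N -> (i <= D)%N -> (D <= m)%N ->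
  (idx ^_ i <= (E.+1) ^ D * m ^_ D)%N.
Proof.
move=> h1 h2 h3.
apply: leq_trans (ffact_mono_base i h1) _.
apply: leq_trans (ffact_shift E (leq_trans h2 h3)) _.
by apply: leq_mul; [rewrite leq_pexp2l|apply: ffact_mono_exp].
Qed.

Lemma final_arith (C : numFieldType) (N am l mD mD1 Cc Csum Kc : C) :
 0 < N -> 0 < am -> 0 < mD -> 2 * Csum * Kc < N * l ->
 N * (am * (l * mD - Cc * mD1)) <= Csum * (am * Kc * mD) -> l * mD < 2 * Cc * mD1.
Proof.
move=> N0 am0 mD0 h1 h2.
have h3 : N * (l * mD - Cc * mD1) <= Csum * Kc * mD.
  rewrite -(ler_pM2l am0) mulrCA; apply: le_trans h2 _.
  by rewrite le_eqVlt; apply/orP; left; apply/eqP; ring.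
have h4 : 2 * Csum * Kc * mD < N * l * mD by rewrite ltr_pM2r.
have h5 : 2 * (N * (l * mD - Cc * mD1)) < N * l * mD.
  apply: le_lt_trans h4; rewrite -!mulrA ler_pM2l ?ltr0n // mulrA //.
have h6 : N * (l * mD) < N * (2 * Cc * mD1).
  rewrite -subr_gt0; rewrite -subr_gt0 in h5.
  by apply: lt_le_trans h5 _; rewrite le_eqVlt; apply/orP; left; apply/eqP; ring.
by rewrite ltr_pM2l in h6.
Qed.

Lemma aux_gap1 m k i D k0 B M1 : (k < B)%N -> (M1 + D + k0 + B <= m)%N -> (k + D != i + k0)%N ->
  (1 <= `|((m + k0 - D - k + i)%N)%:Z - m%:Z|)%R.
Proof. move=> h1 h3 /eqP h4; lia. Qed.
Lemma aux_gap2 m k i D k0 B d M1 N1 : (k < B)%N -> (i < d.+1)%N ->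
  (M1 + D + k0 + B <= m)%N ->
  (`|((m + k0 - D - k + i)%N)%:Z - m%:Z| <= ((N1 + (D + k0 + B + d)).+1)%:Z)%R.
Proof. move=> h1 h2 h3; lia. Qed.
Lemma aux_idx_le m k0 D k i d : (i < d.+1)%N -> (m + k0 - D - k + i <= m + (k0 + d))%N.
Proof. move=> h; lia. Qed.
Lemma aux_Dm M1 D k0 B m : (M1 + D + k0 + B <= m)%N -> (D <= m)%N.
Proof. move=> h; lia. Qed.
Lemma aux_M1 M1 D' k0 B m : (M1 + D'.+1 + k0 + B <= m)%N -> (M1 <= m - D')%N.
Proof. move=> h; lia. Qed.

Section Part1.
Variable C : numFieldType.
Hypothesis archi : forall x : C, 0 <= x -> exists n : nat, x < n%:R.

Definition gapP (a : nat -> C) : Prop :=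
  forall N : nat, forall M : nat, exists m : nat, (M <= m)%N /\
    forall j : int, (1 <= `|j|)%R -> (`|j| <= N%:Z)%R ->
      N%:R * `|ext_int a (m%:Z + j)| < `|a m|.

Lemma sum_cond_le (I : finType) (P : pred I) (F : I -> C) :
  (forall i, 0 <= F i) -> \sum_(i | P i) F i <= \sum_i F i.
Proof.
move=> H; rewrite [X in _ <= X](bigID P) /= lerDl.
by apply: sumr_ge0 => i _.
Qed.

Theorem part1 (a : nat -> C) d (q : 'I_d.+1 -> {poly C}) :
  gapP a -> (exists i, q i != 0) -> diff_op_apply q a <> (fun _ => 0).
Proof.
move=> gap [i0 Hi0] Heq.
have [D HD DM] : exists2 D : 'I_d.+1, q D != 0 & forall i : 'I_d.+1, (D < i)%N -> q i = 0.
  case: (@arg_maxnP _ i0 (fun i => q i != 0) (fun i => nat_of_ord i) Hi0) => D HD Dmax.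
  exists D => // i Di; apply/eqP; apply: contraTT Di => qi; rewrite -leqNgt; exact: Dmax.
set k0 := (size (q D)).-1.
set l0 := (q D)`_k0.
have l0n : l0 != 0 by rewrite /l0 /k0 -lead_coefE lead_coef_eq0.
set B := \max_(i < d.+1) size (q i).
have qB : forall i k, (B <= k)%N -> (q i)`_k = 0.
  move=> i k Bk; apply: nth_default; apply: leq_trans Bk.
  exact: (leq_bigmax i).
have k0B : (k0 < B)%N.
  apply: (@leq_trans (size (q D))); last exact: (leq_bigmax D).
  by rewrite /k0 prednK // size_poly_gt0.
pose c (i : 'I_d.+1) := \sum_(k < B | (k + D == i + k0)%N) (q i)`_k.
have cD : c D = l0.
  rewrite /c (eq_bigl (fun k : 'I_B => k == Ordinal k0B)); first by rewrite big_pred1_eq.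
  by move=> k; rewrite addnC eqn_add2l.
have cz : forall i : 'I_d.+1, (D < i)%N -> c i = 0.
  by move=> i Di; rewrite /c DM // big1 // => k _; rewrite coef0.
pose Cc : C := \sum_(i < d.+1 | i != D) `|c i|.
pose Csum : C := \sum_(i < d.+1) \sum_(k < B) `|(q i)`_k|.
pose E := (k0 + d)%N.
pose Kc := (E.+1 ^ D)%N.
pose W := (D + k0 + B + d)%N.
have l0pos : 0 < `|l0| by rewrite normr_gt0.
have Cc0 : 0 <= Cc by apply: sumr_ge0 => i _.
have Csum0 : 0 <= Csum by apply: sumr_ge0 => i _; apply: sumr_ge0 => k _.
have [N1 HN1] : exists N1 : nat, 2 * Csum * Kc%:R < N1%:R * `|l0|.
  have [N1 HN1] := archi (x := 2 * Csum * Kc%:R / `|l0|) 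
    (divr_ge0 (mulr_ge0 (mulr_ge0 (ler0n C 2) Csum0) (ler0n C Kc)) (ltW l0pos)).
  by exists N1; rewrite -ltr_pdivrMr.
have [M1 HM1] : exists M1 : nat, 2 * Cc < M1%:R * `|l0|.
  have [M1 HM1] := archi (x := 2 * Cc / `|l0|) (divr_ge0 (mulr_ge0 (ler0n C 2) Cc0) (ltW l0pos)).
  by exists M1; rewrite -ltr_pdivrMr.
pose N := (N1 + W).+1.
pose M := (M1 + D + k0 + B)%N.
case: (gap N M) => m [Mm gapm].
pose n := (m + k0 - D)%N.
have Bn : (B <= n.+1)%N by rewrite /n /M in Mm *; lia.
have eqn := congr1 (fun g => g n) Heq; rewrite /diff_op_apply /= in eqn.
pose T (i : 'I_d.+1) (k : nat) := (q i)`_k * (a (n - k + i)%N *+ (n - k + i) ^_ i).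
have eqn1 : \sum_(i < d.+1) \sum_(k < B) T i k = 0.
  rewrite -[RHS]eqn; apply: eq_bigr => i _.
  rewrite (big_ord_widen n.+1 (T i) Bn) big_mkcond; apply: eq_bigr => k _.
  rewrite /ser_of_poly sderivnE /T; case: ifP => // /negbT; rewrite -leqNgt => /qB ->.
  by rewrite mul0r.

pose Oth (i : 'I_d.+1) := \sum_(k < B | (k + D != i + k0)%N) T i k.
pose Rm := \sum_(i < d.+1) c i *+ m ^_ i.
have eqn2 : a m * Rm + \sum_i Oth i = 0.
  rewrite -[RHS]eqn1 mulr_sumr -big_split /=; apply: eq_bigr => i _.
  rewrite [RHS](bigID (fun k : 'I_B => (k + D == i + k0)%N)) /=; congr (_ + _).
  rewrite /c [RHS](eq_bigr (fun k : 'I_B => (q i)`_k * (a m *+ m ^_ i))); last first.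
    move=> k /eqP kD; rewrite /T; have -> : (n - k + i = m)%N.
      have := ltn_ord k; have := ltn_ord i; rewrite /n /M in Mm *; lia.
    by [].
  by rewrite -mulr_suml !mulrnAr mulrC.
have am0 : 0 < `|a m|.
  have := gapm 1 _ _; rewrite normr1 lexx /=; move/(_ isT).
  have -> : (1 <= N%:Z)%R by rewrite /N; lia.
  move/(_ isT) => H; apply: le_lt_trans H; exact: mulr_ge0 (ler0n _ _) (normr_ge0 _).
have Tb : forall (i : 'I_d.+1) (k : 'I_B), (k + D != i + k0)%N ->
    N%:R * `|T i k| <= `|(q i)`_k| * (`|a m| * Kc%:R * (m ^_ D)%:R).
  move=> i k kD; rewrite /T; case: (eqVneq ((q i)`_k) 0) => [->|qn].
    by rewrite mul0r normr0 mulr0 mul0r.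
  have iD : (i <= D)%N.
    by rewrite leqNgt; apply: contra qn => /DM ->; rewrite coef0.
  pose idx := (n - k + i)%N.
  have gapi := gapm (idx%:Z - m%:Z).
  have e : (m%:Z + (idx%:Z - m%:Z) = idx%:Z)%R by rewrite addrC subrK.
  rewrite e /= in gapi.
  have {}gapi : N%:R * `|a idx| < `|a m|.
    apply: gapi; first exact: aux_gap1 (ltn_ord k) Mm kD.
    exact: aux_gap2 (ltn_ord k) (ltn_ord i) Mm.
  rewrite normrM normrMn mulrCA ler_wpM2l // -/idx (mulrnAr _ `|a idx|) -(mulr_natr (_ * `|a idx|)) -[X in _ <= X]mulrA -natrM.
  apply: ler_pM => //; first exact: mulr_ge0 (ler0n _ _) (normr_ge0 _).
    exact: ltW.
  rewrite ler_nat; apply: (@ffact_bound _ _ E) => //.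
    exact: aux_idx_le (ltn_ord i).
  exact: aux_Dm Mm.
have up : N%:R * (`|a m| * `|Rm|) <= Csum * (`|a m| * Kc%:R * (m ^_ D)%:R).
  rewrite -normrM.
  have -> : a m * Rm = - \sum_i Oth i by apply/eqP; rewrite -addr_eq0 eqn2.
  rewrite normrN.
  have h : N%:R * `|\sum_i Oth i| <= N%:R * \sum_(i < d.+1) \sum_(k < B | (k + D != i + k0)%N) `|T i k|.
    rewrite ler_wpM2l //; apply: le_trans (ler_norm_sum _ _ _) _.
    by apply: ler_sum => i _; apply: ler_norm_sum.
  apply: le_trans h _.
  rewrite mulr_sumr /Csum mulr_suml; apply: ler_sum => i _.
  rewrite mulr_sumr mulr_suml; apply: le_trans (sum_cond_le _ _); last first.
    by move=> k; apply: mulr_ge0 => //; apply: mulr_ge0 => //; apply: mulr_ge0.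
  by apply: ler_sum => k kD; apply: Tb.
pose mD1 : C := (m ^_ D.-1)%:R.
have low : `|l0| * (m ^_ D)%:R - Cc * mD1 <= `|Rm|.
  rewrite /Rm (bigD1 D) //=.
  have h := lerB_normD (c D *+ m ^_ D) (\sum_(i < d.+1 | i != D) c i *+ m ^_ i).
  apply: le_trans h.
  rewrite normrMn cD mulr_natr; apply: lerB => //.
  apply: le_trans (ler_norm_sum _ _ _) _; rewrite /Cc mulr_suml; apply: ler_sum => i iD.
  rewrite normrMn -(mulr_natr `|c i|); case: (eqVneq (c i) 0) => [->|cn].
    by rewrite normr0 !mul0r.
  rewrite ler_wpM2l // ler_nat; apply: ffact_mono_exp.
    have : ~~ (D < i)%N by apply: contra cn => /cz ->.
    move: iD; rewrite -leqNgt neq_ltn => /orP [] h1 h2.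
      by rewrite -ltnS (ltn_predK h1).
    by rewrite leqNgt h1 in h2.
  exact: leq_trans (leq_pred _) (aux_Dm Mm).
have mD0 : 0 < ((m ^_ D)%:R : C) by rewrite ltr0n ffact_gt0; exact: aux_Dm Mm.
have hN : 2 * Csum * Kc%:R < N%:R * `|l0|.
  by apply: lt_le_trans HN1 _; rewrite ler_wpM2r // ler_nat /N; apply: ltnW; rewrite ltnS leq_addr.
have key := final_arith (ltr0Sn C (N1 + W)) am0 mD0 hN (le_trans (ler_wpM2l (ler0n _ _) (ler_wpM2l (ltW am0) low)) up).
move: key; rewrite /mD1; case ED : (nat_of_ord D) => [|D'] key.
  have Cc00 : Cc = 0.
    rewrite /Cc big1 // => i iD; rewrite cz ?normr0 //; rewrite ED lt0n; apply: contraNneq iD => ie; apply/eqP/val_inj; by rewrite /= ED ie.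
  by move: key; rewrite Cc00 mulr0 mul0r ffactn0 mulr1 => /(lt_trans l0pos); rewrite ltxx.
rewrite ffactnSr natrM /= mulrCA [X in _ < X]mulrC ltr_pM2l in key; last first.
  by rewrite ltr0n ffact_gt0; apply: ltnW; rewrite -ED; exact: aux_Dm Mm.
have h : M1%:R * `|l0| <= `|l0| * (m - D')%:R.
  rewrite mulrC ler_wpM2l // ler_nat; apply: (@aux_M1 _ _ k0 B); rewrite -ED; exact: Mm.
by have := lt_trans key (lt_le_trans HM1 h); rewrite ltxx.
Qed.

End Part1.

Lemma size_le_top (A : nzRingType) (p : {poly A}) m :
  (size p <= m.+1)%N -> p`_m = 0 -> (size p <= m)%N.
Proof.
move=> /leq_sizeP H pm; apply/leq_sizeP => j; rewrite leq_eqVlt => /orP [/eqP <- //|].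
exact: H.
Qed.

Lemma dep (A : idomainType) m : forall k (Qs : 'I_k -> {poly A}), (m < k)%N ->
  (forall i, size (Qs i) <= m)%N ->
  exists c : 'I_k -> A, (exists i, c i != 0) /\ \sum_i (c i)%:P * Qs i = 0.
Proof.
elim: m => [|m IH] k Qs mk Hs.
  exists (fun _ => 1); split; first by exists (Ordinal mk); rewrite oner_eq0.
  by rewrite big1 // => i _; move: (Hs i); rewrite leqn0 size_poly_eq0 => /eqP ->; rewrite mulr0.
case: (boolP [forall i, (Qs i)`_m == 0]) => [/forallP Hz|].
  apply: IH; first exact: ltnW.
  by move=> i; apply: size_le_top; [exact: Hs|exact/eqP/Hz].
rewrite negb_forall => /existsP [i0 Hi0].
move: Qs mk Hs i0 Hi0; case: k => [|k] Qs mk Hs i0 Hi0; first by case: i0 Hi0.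
set t0 := (Qs i0)`_m.
pose Q' (j : 'I_k) := t0%:P * Qs (lift i0 j) - ((Qs (lift i0 j))`_m)%:P * Qs i0.
have HQ' : forall j, (size (Q' j) <= m)%N.
  move=> j; apply/leq_sizeP => l ml; rewrite /Q' coefB !coefCM.
  move: ml; rewrite leq_eqVlt => /orP [/eqP <-|ml]; first by rewrite mulrC subrr.
  by rewrite (leq_sizeP _ _ (Hs (lift i0 j)) l ml) (leq_sizeP _ _ (Hs i0) l ml) !mulr0 subrr.
have [c' [[j1 Hj1] Hc']] := IH k Q' mk HQ'.
pose e (j : 'I_k.+1) := if unlift i0 j is Some j' then c' j' * t0
  else - \sum_(j' < k) c' j' * (Qs (lift i0 j'))`_m.
exists e; split.
  by exists (lift i0 j1); rewrite /e liftK mulf_neq0.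
rewrite (bigD1_ord i0) //= /e unlift_none.
rewrite -[RHS]Hc' /Q'.
under eq_bigr do rewrite liftK.
under [RHS]eq_bigr do rewrite mulrBr.
rewrite sumrB addrC polyCN mulNr; congr (_ - _).
  by apply: eq_bigr => j _; rewrite polyCM mulrA.
rewrite (rmorph_sum (@polyC A)) mulr_suml; apply: eq_bigr => j _; by rewrite rmorphM /= mulrA.
Qed.

Section Alg.
Variable C : numFieldType.
Local Notation ps := (ps C).

Lemma cphi (x : ps) : commr_rmorph (@phi C) x.
Proof. by move=> y; exact: mulrC. Qed.

Local Notation ev x := (horner_morph (cphi x)).

Lemma evC x a : ev x a%:P = phi a. Proof. exact: horner_morphC. Qed.
Lemma evX x : ev x 'X = x. Proof. exact: horner_morphX. Qed.

Definition pdx (Q : {poly {poly C}}) := map_poly (@deriv C) Q.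

Lemma pdx0 : pdx 0 = 0. Proof. exact: map_poly0. Qed.

Lemma pdxMXC Q c : pdx (Q * 'X + c%:P) = pdx Q * 'X + (c^`())%:P.
Proof.
apply/polyP => i; rewrite /pdx coef_map_id0 ?deriv0 // !coefD !coefMX !coefC.
rewrite coef_map_id0 ?deriv0 //; case: (i == 0%N) => //=.
  by rewrite !add0r.
by rewrite !addr0.
Qed.

Lemma dps_ev (f : ps) Q : dps (ev f Q) = ev f (pdx Q) + ev f Q^`() * dps f.
Proof.
elim/poly_ind: Q => [|Q c IH].
  by rewrite pdx0 deriv0 !rmorph0 dps0 mul0r addr0.
rewrite pdxMXC derivMXaddC !rmorphD !rmorphM /= !evX !evC dpsD dpsM dps_phi IH.
ring.
Qed.

Lemma ev_comp f p q : ev f (p \Po q) = ev (ev f q) p.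
Proof.
rewrite /comp_poly -horner_map /= -map_poly_comp.
by rewrite /horner_morph; congr (_.[_]); apply: eq_map_poly => a /=; rewrite evC.
Qed.

Lemma sexpE (f : ps) k : sexp f k = f ^+ k.
Proof. by elim: k => [|k IH] //; rewrite /sexp iterS -/(sexp f k) IH exprS. Qed.

Lemma poly_eval_evE (P : {poly {poly C}}) (f : ps) : poly_eval_series P f = ev f P.
Proof.
rewrite /horner_morph (horner_coef_wide _ (size_poly _ _)).
apply: funext => n; rewrite /poly_eval_series pssumE; apply: eq_bigr => k _.
by rewrite coef_map /= sexpE.
Qed.

Lemma diff_op_E d (q : 'I_d.+1 -> {poly C}) (f : ps) :
  diff_op_apply q f = \sum_(i < d.+1) phi (q i) * sderivn i f.
Proof. by apply: funext => n; rewrite /diff_op_apply pssumE. Qed.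

Lemma invB (f : ps) (P' : {poly {poly C}}) : ev f P' != 0 ->
  forall B : {poly {poly C}}, B != 0 -> ev (ev f P') B = 0 ->
  exists beta Z, beta != 0 /\ ev f P' * ev f Z = phi beta.
Proof.
move=> S0n; elim/poly_ind => [|B c IH]; first by rewrite eqxx.
move=> Bn; rewrite rmorphD rmorphM /= evX evC.
case: (eqVneq c 0) => [c0|cn].
  rewrite c0 rmorph0 addr0 => h; apply: IH.
    by apply: contraNneq Bn => ->; rewrite mul0r c0 addr0.
  apply/eqP; apply: contraT => hn.
  by move: (psmul_neq0 hn S0n); rewrite h eqxx.
move=> h; exists c, (- (B \Po P')); split => //.
rewrite rmorphN /= ev_comp mulrN [_ * ev (ev f P') B]mulrC.
by apply/eqP; rewrite eq_sym -addr_eq0 addrC h.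
Qed.

Theorem alg_to_diff (f : ps) (P : {poly {poly C}}) : P != 0 -> ev f P = 0 ->
  exists d (q : 'I_d.+1 -> {poly C}), (exists i, q i != 0) /\
    \sum_(i < d.+1) phi (q i) * sderivn i f = 0.
Proof.
move=> Pn eP.
have [P0 [P0n eP0 Pmin]] : exists P0 : {poly {poly C}}, [/\ P0 != 0, ev f P0 = 0 &
    forall Q : {poly {poly C}}, (size Q < size P0)%N -> ev f Q = 0 -> Q = 0].
  suff H : forall N (Q : {poly {poly C}}), (size Q < N)%N -> Q != 0 -> ev f Q = 0 ->
      exists P0 : {poly {poly C}}, [/\ P0 != 0, ev f P0 = 0 &
      forall Q : {poly {poly C}}, (size Q < size P0)%N -> ev f Q = 0 -> Q = 0].
    exact: H _ P (ltnSn _) Pn eP.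
  elim=> [|N IH] Q sQ Qn eQ //.
  case: (pselect (exists Q', [/\ Q' != 0, ev f Q' = 0 & (size Q' < size Q)%N])).
    by move=> [Q' [Q'n eQ' sQ']]; apply: (IH Q') => //; apply: leq_trans sQ' (ltnSE sQ).
  move=> H; exists Q; split => // R sR eR; apply/eqP; apply: contraT => Rn.
  by exfalso; apply: H; exists R.
set L := lead_coef P0.
have Ln : L != 0 by rewrite lead_coef_eq0.
have s2 : (1 < size P0)%N.
  rewrite ltnNge; apply/negP => s1.
  have := eP0; rewrite (size1_polyC s1) evC => /phi_inj H.
  by move: P0n; rewrite (size1_polyC s1) H eqxx.
set d := (size P0).-1.
have sP0 : size P0 = d.+1 by rewrite /d prednK // ltnW.
have d1 : (0 < d)%N by rewrite /d -ltnS prednK // ltnW.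
set P' := P0^`().
have P'n : P' != 0.
  apply/negP => /eqP H.
  have := congr1 (fun p : {poly {poly C}} => p`_(d.-1)) H.
  rewrite /= coef_deriv coef0 prednK //.
  have -> : P0`_d = L by rewrite /L lead_coefE sP0.
  move/(congr1 (fun p : {poly C} => p`_((size L).-1))); rewrite coefMn coef0 => /eqP.
  rewrite mulrn_eq0 -lead_coefE lead_coef_eq0 (negPf Ln) orbF => /eqP d0.
  by rewrite d0 in d1.
set S0 := ev f P'.
have S0n : S0 != 0.
  apply/eqP => S00; move/eqP: P'n; apply; apply: Pmin => //; exact: lt_size_deriv.
have chain : ev f (pdx P0) + S0 * dps f = 0 by rewrite -dps_ev eP0 dps0.
have red : forall Q : {poly {poly C}}, exists p : {poly C} * {poly {poly C}},
    [/\ p.1 != 0, (size p.2 <= d)%N & ev f p.2 = phi p.1 * ev f Q].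
  move=> Q; exists (L ^+ scalp Q P0, Q %% P0); split => /=.
  - by rewrite expf_neq0.
  - by rewrite -ltnS -sP0 ltn_modpN0.
  - have e := Pdiv.Idomain.divp_eq Q P0.
    have -> : Q %% P0 = L ^+ scalp Q P0 *: Q - (Q %/ P0) * P0.
      by rewrite -/L e addrAC subrr add0r.
    by rewrite rmorphB rmorphM /= eP0 mulr0 subr0 -mul_polyC rmorphM /= evC.
have [beta [Z [bn hZ]]] : exists beta Z, beta != 0 /\ S0 * ev f Z = phi beta.
  have red' : forall j : 'I_d.+1, exists p : {poly C} * {poly {poly C}},
      [/\ p.1 != 0, (size p.2 <= d)%N & ev f p.2 = phi p.1 * S0 ^+ j].
    by move=> j; have [p hp] := red (P' ^+ j); exists p; rewrite rmorphXn in hp.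
  have [g hg] := choice red'.
  have [c [[j1 cj1] hc]] := @dep _ d d.+1 (fun j => (g j).2) (ltnSn d)
    (fun j => let: And3 _ h _ := hg j in h).
  pose B := \sum_(j < d.+1) (c j * (g j).1) *: 'X^j.
  apply: (@invB f P' S0n B).
    apply/negP => /eqP H; have := congr1 (fun p : {poly {poly C}} => p`_j1) H.
    rewrite /= coef0 coef_sum (bigD1 j1) //=.
    rewrite coefZ coefXn eqxx mulr1 big1 ?addr0.
      by apply/eqP; rewrite mulf_neq0 //; case: (hg j1).
    move=> j jn; rewrite coefZ coefXn.
    have -> : (nat_of_ord j1 == nat_of_ord j) = false.
      by apply/negP => /eqP /val_inj h; move: jn; rewrite h eqxx.
    by rewrite mulr0.
  rewrite -/S0 rmorph_sum /=.
  have h0 : \sum_(j < d.+1) ev f ((c j)%:P * (g j).2) = 0.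
    by rewrite -rmorph_sum hc rmorph0.
  rewrite -[RHS]h0.
  apply: eq_bigr => j _; rewrite -mul_polyC !rmorphM /= evC rmorphXn /= evX.
  by case: (hg j) => _ _ ->; rewrite !evC mulrA.
have hdf : phi beta * dps f = ev f (- (Z * pdx P0)).
  rewrite -hZ rmorphN rmorphM /=.
  have e : ev f (pdx P0) = - (S0 * dps f) by apply/eqP; rewrite -addr_eq0 chain.
  rewrite e; ring.
have hder : forall i, exists p : {poly C} * {poly {poly C}},
    p.1 != 0 /\ phi p.1 * sderivn i f = ev f p.2.
  elim=> [|i [[g H] /= [gn hH]]].
    by exists (1, 'X); split; [exact: oner_neq0 | rewrite /= rmorph1 mul1r evX].
  exists (g * g * beta, (g * beta)%:P * pdx H + g%:P * H^`() * (- (Z * pdx P0))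
     - (g^`() * beta)%:P * H); split => /=.
    by rewrite !mulf_neq0.
  have e2 := congr1 (@dps C) hH; rewrite dpsM dps_phi dps_ev in e2.
  have e3 : ev f (pdx H) = phi g^`() * sderivn i f + phi g * dps (sderivn i f)
      - ev f H^`() * dps f by rewrite e2 addrK.
  change (phi (g * g * beta) * dps (sderivn i f) = ev f ((g * beta)%:P * pdx H + g%:P * H^`() * - (Z * pdx P0) - (g^`() * beta)%:P * H)).
  rewrite rmorphB rmorphD !rmorphM /= !evC -hdf e3 -hH.
  ring.
have red2 : forall i : 'I_d.+1, exists p : {poly C} * {poly {poly C}},
    [/\ p.1 != 0, (size p.2 <= d)%N & ev f p.2 = phi p.1 * sderivn i f].
  move=> i; have [[g H] /= [gn hH]] := hder i; have [[l R] /= [ln sR eR]] := red H.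
  exists (l * g, R); split => //=; first by rewrite mulf_neq0.
  by rewrite eR -hH rmorphM mulrA.
have [g hg] := choice red2.
have [c [[j1 cj1] hc]] := @dep _ d d.+1 (fun j => (g j).2) (ltnSn d)
  (fun j => let: And3 _ h _ := hg j in h).
exists d, (fun i => c i * (g i).1); split.
  by exists j1; rewrite mulf_neq0 //; case: (hg j1).
have h0 : \sum_(j < d.+1) ev f ((c j)%:P * (g j).2) = 0.
  by rewrite -rmorph_sum hc rmorph0.
rewrite -[RHS]h0.
apply: eq_bigr => i _; rewrite rmorphM /= rmorphM /= evC; case: (hg i) => _ _ ->.
by rewrite mulrA.
Qed.

Theorem part2 (f : ps) (P : {poly {poly C}}) : P != 0 ->
  poly_eval_series P f = (fun _ => 0) ->
  exists d (q : 'I_d.+1 -> {poly C}), (exists i, q i != 0) /\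
    diff_op_apply q f = (fun _ => 0).
Proof.
move=> Pn; rewrite poly_eval_evE => eP.
have [d [q [qn hq]]] := alg_to_diff Pn eP.
by exists d, q; split => //; rewrite diff_op_E hq.
Qed.

End Alg.

Local Open Scope complex_scope.

Lemma archiC (R : realType) (x : R[i]) : 0 <= x -> exists n : nat, x < n%:R.
Proof.
move=> x0; have xr : x \is Num.real := ger0_real x0.
rewrite -(RRe_real xr); rewrite -(RRe_real xr) ler0c in x0.
exists (Num.Def.archi_bound (complex.Re x)).
by rewrite -[X in _ < X](rmorph_nat (real_complex R)) ltcR; exact: archi_boundP.
Qed.

Theorem proposition6p2 (R : realType) (a : nat -> R[i]) :
  gap_property a ->
  (forall (d : nat) (q : 'I_d.+1 -> {poly R[i]}),
      (exists i, q i != 0) -> diff_op_apply q a <> (fun _ => 0))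
  /\
  (forall P : {poly {poly R[i]}}, P != 0 -> poly_eval_series P a <> (fun _ => 0)).
Proof.
move=> gap.
have H1 : forall (d : nat) (q : 'I_d.+1 -> {poly R[i]}),
    (exists i, q i != 0) -> diff_op_apply q a <> (fun _ => 0).
  by move=> d q; apply: (@part1 _ (@archiC R) a d q gap).
split => // P Pn eP.
have [d [q [qn hq]]] := @part2 _ a P Pn eP.
exact: H1 qn hq.
Qed.
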